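(* Let $\mathbb X$ be a separable reflexive Banach space, let $\mu\in\mathbb X$, and let $\hat\mu_1,\ldots,\hat\mu_k$ be independent random elements of $\mathbb X$. Fix $\alpha\in(0,\tfrac12)$. Let $0<p<\alpha$ and $\varepsilon>0$ be such that $$\Pr\big(\|\hat\mu_j-\mu\|>\varepsilon\big)\le p\quad\text{for all }1\le j\le k.$$ Let $\hat\mu=\mathrm{med}(\hat\mu_1,\ldots,\hat\mu_k)$. Then $$\Pr\big(\|\hat\mu-\mu\|>C_\alpha\varepsilon\big)\le e^{-k\psi(\alpha;p)}.$$ Here $C_\alpha=\frac{2(1-\alpha)}{1-2\alpha}$ in general, and $C_\alpha=(1-\alpha)\sqrt{\frac1{1-2\alpha}}$ when $\mathbb X$ is a Hilbert space.
   Context: $\mathrm{med}(x_1,\ldots,x_k)$ denotes a geometric median, i.e. any minimizer over $y\in\mathbb X$ of $\sum_{j=1}^k\|y-x_j\|$. For $0<p<\alpha<\tfrac12$, $$\psi(\alpha;p)=(1-\alpha)\log\frac{1-\alpha}{1-p}+\alpha\log\frac{\alpha}{p}.$$ *)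

(* Defs.v *)
From HB Require Import structures.
From mathcomp Require Import all_boot all_order all_algebra.
From mathcomp Require Import all_classical all_reals all_analysis.
Set Implicit Arguments. Unset Strict Implicit. Unset Printing Implicit Defensive.
Import Order.TTheory GRing.Theory Num.Theory.
Import numFieldNormedType.Exports.
Local Open Scope classical_set_scope.
Local Open Scope ring_scope.

Definition psi {R : realType} (alpha p : R) : R :=
  (1 - alpha) * ln ((1 - alpha) / (1 - p)) + alpha * ln (alpha / p).

Definition separable {R : realType} (X : normedModType R) : Prop :=
  exists D : set X, countable D /\ dense D.

Definition dual_elt {R : realType} (X : normedModType R) (f : X -> R) : Prop :=
  (forall (a : R) (x y : X), f (a *: x + y) = a * f x + f y) /\
  exists M : R, forall x : X, `|f x| <= M * `|x|.

(* bounded linear functionals on X^* (operator norm on X^* expressed via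
   the admissible bounds M of f), i.e. elements of X^** *)
Definition bidual_elt {R : realType} (X : normedModType R)
    (Phi : (X -> R) -> R) : Prop :=
  (forall (a : R) (f g : X -> R), dual_elt f -> dual_elt g ->
      Phi (fun x => a * f x + g x) = a * Phi f + Phi g) /\
  exists C : R, forall (f : X -> R) (M : R), dual_elt f -> 0 <= M ->
      (forall x : X, `|f x| <= M * `|x|) -> `|Phi f| <= C * M.

Definition reflexive_space {R : realType} (X : normedModType R) : Prop :=
  forall Phi : (X -> R) -> R, bidual_elt Phi ->
    exists x : X, forall f : X -> R, dual_elt f -> Phi f = f x.

(* X is a Hilbert space: its norm comes from an inner product
   (completeness is part of the ambient structure) *)
Definition hilbert_norm {R : realType} (X : normedModType R) : Prop :=
  exists ip : X -> X -> R,
    (forall x y : X, ip x y = ip y x) /\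
    (forall (a : R) (x y z : X), ip (a *: x + y) z = a * ip x z + ip y z) /\
    (forall x : X, `|x| ^+ 2 = ip x x).

Definition borel_set {R : realType} (X : normedModType R) (B : set X) : Prop :=
  <<s [set U : set X | open U] >> B.

Definition random_elt {d} {T : measurableType d} {R : realType}
    (X : normedModType R) (f : T -> X) : Prop :=
  forall B : set X, borel_set B -> measurable (f @^-1` B).

Definition mutually_independent {d} {T : measurableType d} {R : realType}
    (P : probability T R) (X : normedModType R) (k : nat)
    (f : 'I_k -> T -> X) : Prop :=
  forall B : 'I_k -> set X, (forall j, borel_set (B j)) ->
    P (\bigcap_(j in [set: 'I_k]) (f j @^-1` B j)) =
    (\prod_(j < k) P (f j @^-1` B j))%E.

Definition is_geomed {R : realType} (X : normedModType R) (k : nat)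
    (xs : 'I_k -> X) (y : X) : Prop :=
  forall z : X, \sum_(j < k) `|y - xs j| <= \sum_(j < k) `|z - xs j|.

(* Main.v *)
Require Import Defs.
From HB Require Import structures.
From mathcomp Require Import all_boot all_order all_algebra.
From mathcomp Require Import all_classical all_reals all_analysis.
From mathcomp Require Import ring lra.
Import Order.TTheory GRing.Theory Num.Theory.
Import numFieldNormedType.Exports.
Local Open Scope classical_set_scope.
Local Open Scope ring_scope.


Lemma psi_id (R : realType) (alpha p : R) : 0 < alpha < 1 -> 0 < p < alpha ->
  ln (p * (alpha * (1 - p) / (p * (1 - alpha))) + (1 - p)) - alpha * ln (alpha * (1 - p) / (p * (1 - alpha))) = - psi alpha p.
Proof.
move=> /andP[a0 a1] /andP[p0 pa]; set t := alpha * (1 - p) / (p * (1 - alpha)).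
have hu : p * t + (1 - p) = (1 - p) / (1 - alpha).
  rewrite /t; field; apply/andP; split; rewrite ?gt_eqF //; lra.
have P1 : 0 < 1 - p by lra.
have A1 : 0 < 1 - alpha by lra.
rewrite hu /t /psi.
rewrite !ln_div ?posrE ?mulr_gt0 ?divr_gt0 //.
rewrite !lnM ?posrE //.
lra.
Qed.

Lemma sum_bound (R : realType) (k : nat) (q : 'I_k -> R) (alpha p : R) :
  0 < alpha < 1 -> 0 < p < alpha -> (forall j, 0 <= q j <= p) ->
  \sum_(J : {set 'I_k} | alpha * k%:R <= #|J|%:R)
     \prod_j (if j \in J then q j else 1 - q j) <= expR (- (k%:R * psi alpha p)).
Proof.
move=> /andP[a0 a1] /andP[p0 pa] hq.
pose t := alpha * (1 - p) / (p * (1 - alpha)).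
have t1 : 1 <= t.
  rewrite /t ler_pdivlMr ?mulr_gt0 //; try lra.
have t0 : 0 < t by lra.
pose lam := ln t.
have lam0 : 0 <= lam by rewrite /lam ln_ge0.
have tE : expR lam = t by rewrite /lam lnK.
have Tge0 : forall J : {set 'I_k}, 0 <= \prod_j (if j \in J then q j else 1 - q j).
  move=> J; apply: prodr_ge0 => j _; case: ifP => _; have := hq j; lra.
apply: (@le_trans _ _ (\sum_(J : {set 'I_k})
   \prod_j (if j \in J then q j * t else 1 - q j) * expR (- (lam * (alpha * k%:R))))).
  rewrite [X in _ <= X](bigID (fun J : {set 'I_k} => alpha * k%:R <= #|J|%:R)) /=.
  rewrite -[X in X <= _]addr0; apply: lerD; last first.
    apply: sumr_ge0 => J _; apply: mulr_ge0; last exact: expR_ge0.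
    apply: prodr_ge0 => j _; case: ifP => _; have := hq j; nra.
  apply: ler_sum => J hJ.
  have -> : \prod_j (if j \in J then q j * t else 1 - q j) =
      \prod_j (if j \in J then q j else 1 - q j) * t ^+ #|J|.
    rewrite -prodr_const [X in _ * X]big_mkcond -big_split /=.
    by apply: eq_bigr => j _; case: ifP; rewrite ?mulr1.
  rewrite -mulrA; apply: ler_peMr; first exact: Tge0.
  rewrite -tE -expRM_natl -expRD; apply: le_trans (expR_ge1Dx _).
  rewrite lerDl; nra.
rewrite -big_distrl /= -bigA_distr.
have u0 : 0 < p * t + (1 - p) by nra.
apply: (@le_trans _ _ ((p * t + (1 - p)) ^+ k * expR (- (lam * (alpha * k%:R))))).
  apply: ler_wpM2r; first exact: expR_ge0.
  rewrite -[k in X in _ <= X]card_ord -prodr_const; apply: ler_prod => j _.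
  case/andP: (hq j) => ? ?; change (0 <= q j * t + (1 - q j) <= p * t + (1 - p)); apply/andP; split; nra.
rewrite -[p * t + (1 - p)]lnK ?posrE // -expRM_natl -expRD ler_expR.
have hp : 0 < alpha < 1 by apply/andP.
have hp2 : 0 < p < alpha by apply/andP.
have := @psi_id R alpha p hp hp2; rewrite -/t -/lam => h.
have -> : psi alpha p = alpha * lam - ln (p * t + (1 - p)) by lra.
rewrite le_eqVlt; apply/orP; left; apply/eqP; ring.
Qed.
Lemma subadd_seq d (T : measurableType d) (R : realType) (P : probability T R)
  (I : Type) (s : seq I) (Q : pred I) (F : I -> set T) :
  (forall i, measurable (F i)) ->
  (P (\big[setU/set0]_(i <- s | Q i) F i) <= \sum_(i <- s | Q i) P (F i))%E.
Proof.
move=> mF; elim: s => [|i s IH]; first by rewrite !big_nil measure0.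
rewrite !big_cons; case: ifP => _ //.
apply: le_trans (measureU2 _ _ _) _ => //.
  exact: bigsetU_measurable.
exact: leeD2l.
Qed.

Lemma sub_bigsetU (T : Type) (I : eqType) (s : seq I) (Q : pred I) (F : I -> set T) i0 :
  i0 \in s -> Q i0 -> F i0 `<=` \big[setU/set0]_(i <- s | Q i) F i.
Proof.
elim: s => [//|i s IH]; rewrite in_cons => /orP[/eqP <-|h] Qi0 x Fx;
  rewrite big_cons.
  by rewrite Qi0; left.
by case: ifP => _; [right|]; apply: IH.
Qed.

Lemma setC_false (T : Type) (b : T -> bool) : [set w | b w = false] = ~` [set w | b w].
Proof. by apply/seteqP; split => w /=; case: (b w). Qed.

Lemma prob_count d (T : measurableType d) (R : realType) (P : probability T R)
  (k : nat) (b : 'I_k -> T -> bool) (alpha p : R) (A : set T) :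
  0 < alpha < 1 -> 0 < p < alpha ->
  (forall j, measurable [set w | b j w]) ->
  (forall J : {set 'I_k},
     P (\bigcap_(j in [set: 'I_k]) [set w | b j w = (j \in J)]) =
     (\prod_(j < k) P [set w | b j w = (j \in J)])%E) ->
  (forall j, (P [set w | b j w] <= p%:E)%E) ->
  measurable A ->
  A `<=` [set w | alpha * k%:R <= #|[set j | b j w]%SET|%:R] ->
  (P A <= (expR (- (k%:R * psi alpha p)))%:E)%E.
Proof.
move=> ha hp mb indep hP mA sA.
pose q j := fine (P [set w | b j w]).
have PE j : P [set w | b j w] = (q j)%:E by rewrite /q fineK // fin_num_measure.
have q0p j : 0 <= q j <= p.
  by rewrite -!lee_fin -PE measure_ge0 hP.
have mS (J : {set 'I_k}) j : measurable [set w | b j w = (j \in J)].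
  by case: (j \in J); [exact: mb | rewrite setC_false; apply: measurableC].
have PS (J : {set 'I_k}) j : P [set w | b j w = (j \in J)] = (if j \in J then q j else 1 - q j)%:E.
  case: (j \in J); first exact: PE.
  by rewrite setC_false probability_setC // PE.
pose F (J : {set 'I_k}) := \bigcap_(j in [set: 'I_k]) [set w | b j w = (j \in J)].
have mF J : measurable (F J).
  by apply: fin_bigcap_measurable => //; exact: finite_finset.
apply: (@le_trans _ _ (P (\big[setU/set0]_(J : {set 'I_k} | alpha * k%:R <= #|J|%:R) F J))).
  apply: le_measure; rewrite ?inE //; first exact: bigsetU_measurable.
  move=> w Aw; have h := (@sub_bigsetU T _ (index_enum {set 'I_k}) (fun J : {set 'I_k} => alpha * k%:R <= #|J|%:R) F [set j | b j w]%SET (mem_index_enum _) (sA w Aw)).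
  apply: h.
  by move=> j _ /=; rewrite inE.
apply: le_trans; first (apply: subadd_seq => //).
under eq_bigr => J _ do rewrite indep (eq_bigr _ (fun j _ => PS J j)) prodEFin.
rewrite sumEFin lee_fin; exact: sum_bound.
Qed.
Lemma sum_if_split (R : realType) (k : nat) (B : {set 'I_k}) (c e : R) :
  \sum_(j < k) (c + (if j \in B then e else 0)) = k%:R * c + #|B|%:R * e.
Proof.
rewrite big_split /= sumr_const card_ord -big_mkcond /= sumr_const.
by rewrite !mulr_natl.
Qed.

Lemma geomed_general (R : realType) (X : normedModType R) (k : nat)
  (xs : 'I_k -> X) (y mu : X) (alpha eps : R) :
  0 < alpha < 1 / 2 -> 0 < eps -> is_geomed xs y ->
  2 * (1 - alpha) / (1 - 2 * alpha) * eps < `|y - mu| ->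
  alpha * k%:R <= #|[set j | eps < `|xs j - mu|]%SET|%:R.
Proof.
move=> /andP[a0 a1] e0 hg hr.
set r := `|y - mu| in hr *.
set B := [set j | eps < `|xs j - mu|]%SET.
have a2 : 0 < 1 - 2 * alpha by lra.
have hC : 2 * (1 - alpha) * eps < (1 - 2 * alpha) * r.
  move: hr; rewrite mulrAC ltr_pdivrMr //; lra.
have re : eps < r.
  rewrite ltNge; apply/negP => h.
  have h' : 0 <= eps - r by rewrite subr_ge0.
  have := mulr_ge0 (ltW a2) h'; lra.
have key : 0 <= \sum_(j < k) ((2 * eps - r) + (if j \in B then 2 * r - 2 * eps else 0)).
  apply: (@le_trans _ _ (\sum_(j < k) (`|mu - xs j| - `|y - xs j|))).
    by rewrite sumrB subr_ge0; apply: hg.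
  apply: ler_sum => j _.
  have t1 : `|mu - xs j| <= r + `|y - xs j|.
    have -> : mu - xs j = (mu - y) + (y - xs j) by rewrite addrA subrK.
    by apply: le_trans (ler_normD _ _) _; rewrite /r distrC.
  have t2 : r <= `|y - xs j| + `|xs j - mu|.
    rewrite /r; have -> : y - mu = (y - xs j) + (xs j - mu) by rewrite addrA subrK.
    exact: ler_normD.
  have t3 : `|mu - xs j| = `|xs j - mu| by rewrite distrC.
  rewrite /B inE; case: ifP => hj; lra.
rewrite sum_if_split in key.
rewrite leNgt; apply/negP => hb.
have k0 : 0 <= k%:R :> R by [].
have h1 : #|B|%:R * (r - eps) < alpha * k%:R * (r - eps).
  by rewrite ltr_pM2r // subr_gt0.
have h3 : 0 <= (1 - 2 * alpha) * r - 2 * (1 - alpha) * eps.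
  by rewrite subr_ge0 ltW.
have h2 := mulr_ge0 k0 h3.
lra.
Qed.
Lemma small_lim (R : realType) (u v : R) :
  0 <= v -> (forall s, 0 < s <= 1 -> 0 <= u + s * v) -> 0 <= u.
Proof.
move=> v0 h; rewrite leNgt; apply/negP => u0.
have vu : 0 < v - u by lra.
pose s := - u / (v - u).
have s0 : 0 < s by rewrite /s divr_gt0 //; lra.
have s1 : s <= 1 by rewrite /s ler_pdivrMr //; lra.
have := h s; rewrite s0 s1 => /(_ isT).
have -> : u + s * v = - (u ^+ 2) / (v - u).
  by rewrite /s; field; rewrite gt_eqF.
rewrite pmulr_lge0 ?invr_gt0 // oppr_ge0 => h2.
have : 0 < u ^+ 2 by rewrite exprn_even_gt0 //= lt_eqF.
lra.
Qed.

Lemma ip_facts (R : realType) (X : normedModType R) :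
  hilbert_norm X -> exists ip : X -> X -> R,
  forall (a b : X) (s : R), `|a - s *: b| ^+ 2 = `|a| ^+ 2 - 2 * s * ip a b + s ^+ 2 * `|b| ^+ 2.
Proof.
move=> [ip [sym [lin nrm]]]; exists ip => a b s.
have ip0 z : ip 0 z = 0.
  have := lin 1 0 0 z; rewrite scale1r addr0 mul1r; lra.
have ipD x y z : ip (x + y) z = ip x z + ip y z.
  by have := lin 1 x y z; rewrite scale1r mul1r.
have ipZ c x z : ip (c *: x) z = c * ip x z.
  by have := lin c x 0 z; rewrite !addr0 ip0 addr0.
have ipB x y z : ip (x - s *: y) z = ip x z - s * ip y z.
  by rewrite ipD -scaleNr ipZ mulNr.
rewrite !nrm ipB (sym a (a - s *: b)) (sym b (a - s *: b)) !ipB (sym b a).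
ring.
Qed.

Lemma geomed_hilbert (R : realType) (X : normedModType R) (k : nat)
  (xs : 'I_k -> X) (y mu : X) (alpha eps : R) :
  0 < alpha < 1 / 2 -> 0 < eps -> hilbert_norm X -> is_geomed xs y ->
  (1 - alpha) * Num.sqrt (1 / (1 - 2 * alpha)) * eps < `|y - mu| ->
  alpha * k%:R <= #|[set j | eps < `|xs j - mu|]%SET|%:R.
Proof.
move=> /andP[a0 a1] e0 /ip_facts [ip hip] hg hr.
set b := y - mu.
set r := `|b| in hr *.
set B := [set j | eps < `|xs j - mu|]%SET.
have a2 : 0 < 1 - 2 * alpha by lra.
set sq := Num.sqrt (1 / (1 - 2 * alpha)) in hr.
have sq0 : 0 <= sq by exact: sqrtr_ge0.
have sq2 : sq ^+ 2 = 1 / (1 - 2 * alpha) by rewrite sqr_sqrtr // divr_ge0 // ltW.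
have r0 : 0 <= r by exact: normr_ge0.
have hr2 : (1 - alpha) ^+ 2 * eps ^+ 2 < (1 - 2 * alpha) * r ^+ 2.
  set c := (1 - alpha) * sq * eps in hr.
  have c0 : 0 <= c by rewrite /c mulr_ge0 ?mulr_ge0 // ?ltW //; lra.
  have hc : c ^+ 2 < r ^+ 2 by rewrite ltr_pXn2r ?nnegrE.
  have -> : (1 - alpha) ^+ 2 * eps ^+ 2 = (1 - 2 * alpha) * c ^+ 2.
    rewrite /c !exprMn sq2; field; rewrite gt_eqF //.
  by rewrite ltr_pM2l.
have re : eps < r.
  rewrite ltNge; apply/negP => h.
  have h1 : r ^+ 2 <= eps ^+ 2 by rewrite ler_pXn2r ?nnegrE // ltW.
  have h4 : 0 <= eps ^+ 2 - r ^+ 2 by rewrite subr_ge0.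
  have h2 := mulr_ge0 (ltW a2) h4.
  have h3 : 0 <= alpha ^+ 2 * eps ^+ 2 by rewrite mulr_ge0 // sqr_ge0.
  nra.
pose D := r ^+ 2 - eps ^+ 2.
have D0 : 0 < D by rewrite /D subr_gt0 ltr_pXn2r ?nnegrE // ltW.
pose sd := Num.sqrt D.
have sd0 : 0 < sd by rewrite /sd sqrtr_gt0.
have sd2 : sd ^+ 2 = D by rewrite /sd sqr_sqrtr // ltW.
pose K := r ^+ 2 / (2 * (r - eps)).
have K0 : 0 <= K by rewrite /K divr_ge0 ?sqr_ge0 // mulr_ge0 //; lra.
have hK : K * (2 * (r - eps)) = r ^+ 2 by rewrite /K mulfVK // gt_eqF //; lra.
have key : forall s, 0 < s <= 1 ->
    0 <= k%:R * (- s * sd + s ^+ 2 * K) + #|B|%:R * (s * r - (- s * sd + s ^+ 2 * K)).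
  move=> s /andP[s0 s1].
  rewrite -sum_if_split.
  apply: (@le_trans _ _ (\sum_(j < k) (`|(y - s *: b) - xs j| - `|y - xs j|))).
    by rewrite sumrB subr_ge0; apply: hg.
  apply: ler_sum => j _.
  have -> : y - s *: b - xs j = (y - xs j) - s *: b by rewrite addrAC.
  set a := y - xs j.
  set N := `|a - s *: b|.
  set A := `|a|.
  rewrite /B inE; case: ifP => hj.
    have : N <= A + s * r.
      by rewrite /N /A /r; apply: le_trans (ler_normB _ _) _; rewrite normrZ ger0_norm // ltW.
    lra.
  have hj' : `|xs j - mu| <= eps by rewrite leNgt hj.
  have tA : r <= A + `|xs j - mu|.
    rewrite /r /A /b /a; have -> : y - mu = (y - xs j) + (xs j - mu) by rewrite addrA subrK.
    exact: ler_normD.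
  have A0 : r - eps <= A by lra.
  have Ap : 0 < A by lra.
  have hN := hip a b s; rewrite -/N -/A -/r in hN.
  have h1 := hip a b 1; rewrite scale1r ?mulr1 ?expr1n ?mul1r -/A -/r in h1.
  have hab : `|a - b| <= eps.
    by rewrite /a /b opprB [X in `|X|]addrC addrA subrK distrC.
  have hab2 : `|a - b| ^+ 2 <= eps ^+ 2 by rewrite ler_pXn2r ?nnegrE // ltW.
  set c := ip a b in hN h1.
  have e1 : 2 * A * N <= N ^+ 2 + A ^+ 2.
    have := sqr_ge0 (N - A); lra.
  have e2 : s * (A ^+ 2 + r ^+ 2 - eps ^+ 2) <= s * (2 * c).
    rewrite ler_pM2l //; lra.
  have e3 : 2 * A * sd <= A ^+ 2 + D.
    have := sqr_ge0 (A - sd); rewrite -sd2; lra.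
  have e4 : s * (2 * A * sd) <= s * (A ^+ 2 + D) by rewrite ler_pM2l.
  have e5 : s ^+ 2 * (K * (2 * (r - eps))) <= s ^+ 2 * (K * (2 * A)).
    rewrite ler_wpM2l ?sqr_ge0 // ler_wpM2l //; lra.
  rewrite hK in e5.
  have e6 : 2 * A * N <= 2 * A * (A + (- s * sd + s ^+ 2 * K)).
    rewrite /D in e4; lra.
  rewrite ler_pM2l in e6; last lra.
  lra.
set bb := #|B|%:R in key *.
set kk := k%:R in key *.
have bk : bb <= kk.
  by rewrite /bb /kk ler_nat -[X in (_ <= X)%N]card_ord max_card.
have b0 : 0 <= bb by rewrite /bb ler0n.
have hu : 0 <= bb * (r + sd) - kk * sd.
  apply: (@small_lim _ _ ((kk - bb) * K)).
    by rewrite mulr_ge0 // subr_ge0.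
  move=> s hs; have := key s hs; case/andP: hs => s0 _.
  have -> : kk * (- s * sd + s ^+ 2 * K) + bb * (s * r - (- s * sd + s ^+ 2 * K))
    = s * (bb * (r + sd) - kk * sd + s * ((kk - bb) * K)) by ring.
  by rewrite pmulr_rge0.
rewrite leNgt; apply/negP => hb.
have k0 : 0 < kk.
  by rewrite lt_neqAle ler0n andbT; apply/negP => /eqP k0; move: hb; rewrite -k0 mulr0; lra.
have g2 : bb * r < alpha * kk * r by rewrite ltr_pM2r //; lra.
have g3 : (1 - alpha) * kk * sd <= (kk - bb) * sd by rewrite ler_pM2r //; lra.
have g4 : (1 - alpha) * sd * kk < alpha * r * kk by lra.
rewrite ltr_pM2r // in g4.
have m0 : 0 <= (1 - alpha) * sd by rewrite mulr_ge0 // ?ltW //; lra.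
have g5 : ((1 - alpha) * sd) ^+ 2 < (alpha * r) ^+ 2.
  by rewrite ltr_pXn2r ?nnegrE // (le_trans m0) // ltW.
rewrite !exprMn sd2 /D in g5.
nra.
Qed.

Theorem theorem3p1 (R : realType) (X : completeNormedModType R)
  (d : measure_display) (T : measurableType d) (P : probability T R)
  (k : nat) (muh : 'I_k -> T -> X) (mu : X) (alpha p eps : R)
  (medh : T -> X) :
  separable X -> reflexive_space X ->
  (forall j, random_elt (muh j)) ->
  mutually_independent P muh ->
  0 < alpha < 1 / 2 -> 0 < p < alpha -> 0 < eps ->
  (forall j, (P [set w | (eps < `|muh j w - mu|)%R] <= p%:E)%E) ->
  (forall w, is_geomed (fun j => muh j w) (medh w)) ->
  random_elt medh ->
  (P [set w | ((2 * (1 - alpha) / (1 - 2 * alpha)) * eps < `|medh w - mu|)%R]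
     <= (expR (- (k%:R * psi alpha p)))%:E)%E /\
  (hilbert_norm X ->
   P [set w | (((1 - alpha) * Num.sqrt (1 / (1 - 2 * alpha))) * eps
                < `|medh w - mu|)%R]
     <= (expR (- (k%:R * psi alpha p)))%:E)%E.
Proof.
move=> _ _ rand indep ha hp e0 hP hmed rmed.
have ha' : 0 < alpha < 1 by case/andP: ha => a0 a1; apply/andP; split => //; lra.
have ncont : continuous (Num.norm \o (fun y : X => y - mu)).
  move=> x; apply: continuous_comp; last exact: norm_continuous.
  have h1 : {for x, continuous (@idfun X)} by exact: cvg_id.
  exact: (@continuousB R X X idfun (fun=> mu) x h1 (@cst_continuous _ _ mu x)).
have openG c : open [set x : X | c < `|x - mu|].
  have -> : [set x : X | c < `|x - mu|] = (Num.norm \o (fun y : X => y - mu)) @^-1` [set x | x > c] by [].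
  by move/continuousP : ncont; apply; exact: open_gt.
have borelG c : borel_set [set x : X | c < `|x - mu|].
  by apply: sub_sigma_algebra; exact: openG.
have borelGC : borel_set (~` [set x : X | eps < `|x - mu|]).
  rewrite -setTD; apply: sigma_algebraCD; exact: borelG.
pose b (j : 'I_k) (w : T) := eps < `|muh j w - mu|.
have mb j : measurable [set w | b j w] by exact: (rand j _ (borelG eps)).
have hind (J : {set 'I_k}) :
    P (\bigcap_(j in [set: 'I_k]) [set w | b j w = (j \in J)]) =
    (\prod_(j < k) P [set w | b j w = (j \in J)])%E.
  pose B j := if j \in J then [set x : X | eps < `|x - mu|]
              else ~` [set x : X | eps < `|x - mu|].
  have hB j : borel_set (B j) by rewrite /B; case: ifP.
  have E j : muh j @^-1` B j = [set w | b j w = (j \in J)].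
    by rewrite /B; case: (j \in J) => //; rewrite setC_false.
  have := indep B hB.
  have EF : (fun j => muh j @^-1` B j) = (fun j => [set w | b j w = (j \in J)]).
    by apply: funext => j; exact: E.
  move=> h.
  rewrite [in RHS](eq_bigr _ (fun j _ => congr1 P (esym (E j)))).
  have -> : \bigcap_(j in [set: 'I_k]) [set w | b j w = (j \in J)] =
     \bigcap_(j in [set: 'I_k]) (muh j @^-1` B j) by rewrite EF.
  exact: h.
have main (A : set T) : measurable A ->
    (forall w, A w -> alpha * k%:R <= #|[set j | b j w]%SET|%:R) ->
    (P A <= (expR (- (k%:R * psi alpha p)))%:E)%E.
  move=> mA sA; apply: (@prob_count _ _ _ P k b alpha p A ha' hp mb hind hP mA) => w Aw.
  exact: sA.
split.
  apply: main => //; first exact: (rmed _ (borelG _)).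
  move=> w /= hw; exact: (@geomed_general R X k (fun j => muh j w) (medh w) mu alpha eps ha e0 (hmed w) hw).
move=> hX.
apply: main => //; first exact: (rmed _ (borelG _)).
move=> w /= hw; exact: (@geomed_hilbert R X k (fun j => muh j w) (medh w) mu alpha eps ha e0 hX (hmed w) hw).
Qed.
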